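(* Let $T$ be the BFS tree produced by temporal BFS on a temporal graph $G=(V,E)$ from source $s$ with starting time $t_s$, let $v\neq s$ be a vertex reachable from $s$, and let $v_o$ be the occurrence of $v$ in $T$ of smallest level (the first occurrence of $v$). Then the level of $v_o$ equals $dist(s,v)$, the minimum number of hops of a temporal path from $s$ to $v$ starting at or after $t_s$.
   Context: A temporal graph is a pair $G=(V,E)$ where $V$ is a finite set of vertices and $E$ is a finite set of temporal edges, i.e. triples $(u,v,t)$ with $u,v\in V$, $u\neq v$, $t\in\mathbb{R}$ (the time at which the edge is active); distinct elements of $E$ are distinct triples. Fix $t_s\in\mathbb{R}$ and $s\in V$. A temporal path from $x$ to $y$ (starting at or after $t_s$) is a sequence $P=\langle (w_1,w_2,t_1),\dots,(w_k,w_{k+1},t_k)\rangle$ of $k\ge1$ edges of $E$ with $w_1=x$, $w_{k+1}=y$ and $t_s\le t_1\le t_2\le\dots\le t_k$; its number of hops is $k$. A vertex $y$ is reachable from $s$ if such a path from $s$ to $y$ exists. Temporal BFS. Records are tuples $(x,d,\tau,p)$ (vertex $x$, level $d$, time $\tau$, predecessor record $p$ or none); every record ever created is an occurrence (node) of the BFS tree $T$, rooted at the initial record, with a tree edge from the predecessor record to the record; the level and time of an occurrence are the final values of its fields. For each $x\in V$ a current value $\sigma(x)$ is kept, initially $\infty$, and set to $\tau$ whenever a record of $x$ is created or its time is updated to $\tau$. Initially the FIFO queue $Q$ contains only $(s,0,t_s,\text{none})$ and $\sigma(s)=t_s$; no edge is traversed. While $Q\neq\emptyset$: pop the front record $R=(u,d_u,\sigma_u,p_u)$;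 let $B$ be the set of edges $(u,v,t)\in E$ not yet traversed with $\sigma_u\le t$; for each vertex $v$ such that $B$ contains an edge to $v$ (in any order), let $e=(u,v,t)$ be the edge of $B$ to $v$ with smallest $t$, mark $e$ traversed, and: (i) if $Q$ contains no record of $v$ and $\sigma(v)>t$, create $(v,d_u+1,t,R)$ and append it to $Q$; (ii) if $Q$ contains a record of $v$ with level $d_u+1$ and $\sigma(v)>t$, set that record's time to $t$ and predecessor to $R$; (iii) if $Q$ contains a record of $v$ but none with level $d_u+1$, and $\sigma(v)>t$, create $(v,d_u+1,t,R)$ and append it to $Q$. *)

(* Defs.v *)
From Stdlib Require Import Reals List Relations.
Import ListNotations.
Open Scope R_scope.
Set Implicit Arguments.

Definition edge (V : Type) : Type := (V * V * R)%type.

Fixpoint twalk (V : Type) (E : list (edge V)) (x y : V) (tmin : R)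
  (P : list (edge V)) : Prop :=
  match P with
  | [] => x = y
  | (a, b, t) :: P' => In (a, b, t) E /\ a = x /\ tmin <= t /\ twalk E b y t P'
  end.

Definition tpath (V : Type) (E : list (edge V)) (ts : R) (x y : V)
  (P : list (edge V)) : Prop := P <> [] /\ twalk E x y ts P.

Definition reachable (V : Type) (E : list (edge V)) (ts : R) (s y : V) : Prop :=
  exists P, tpath E ts s y P.

Definition is_dist (V : Type) (E : list (edge V)) (ts : R) (s y : V) (k : nat) : Prop :=
  (exists P, tpath E ts s y P /\ length P = k) /\
  (forall P, tpath E ts s y P -> (k <= length P)%nat).

(* A record (x, d, tau, p); the predecessor is the index (creation id) of
   the predecessor record.  Records are identified by their index in the
   list of all records ever created (= the nodes of the BFS tree T). *)
Record rec (V : Type) := mkRec { rv : V; rlvl : nat; rtime : R; rpred : option nat }.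

(* Phase of the algorithm: either about to pop the front of the queue, or
   processing the popped record [rid] = (u, d, tau, _), where B is the set of
   edges (u, v, t) of E not in [tr0] (the traversed edges at pop time) with
   tau <= t, and [done] lists the target vertices already handled. *)
Inductive phase (V : Type) :=
| PPop : phase V
| PProc : nat -> V -> nat -> R -> list (edge V) -> list V -> phase V.

Record state (V : Type) := mkSt {
  recs  : list (rec V);          (* all records ever created, by id *)
  queue : list nat;              (* FIFO queue of record ids, front first *)
  sigma : V -> option R;         (* current value; None = infinity *)
  trav  : list (edge V);
  ph    : phase V }.

Definition sgt (o : option R) (t : R) : Prop :=
  match o with None => True | Some x => t < x end.

Definition inB (V : Type) (E : list (edge V)) (u : V) (tau : R)
  (tr0 : list (edge V)) (e : edge V) : Prop :=
  In e E /\ fst (fst e) = u /\ ~ In e tr0 /\ tau <= snd e.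

Definition qhas (V : Type) (st : state V) (v : V) (P : rec V -> Prop) : Prop :=
  exists j r, In j (queue st) /\ nth_error (recs st) j = Some r /\ rv r = v /\ P r.

Fixpoint upd_nth (A : Type) (l : list A) (j : nat) (a : A) : list A :=
  match l, j with
  | [], _ => []
  | _ :: l', O => a :: l'
  | b :: l', S j' => b :: upd_nth l' j' a
  end.

Definition sig_upd (V : Type) (sg sg' : V -> option R) (v : V) (t : R) : Prop :=
  sg' v = Some t /\ forall x, x <> v -> sg' x = sg x.

Inductive step (V : Type) (E : list (edge V)) : state V -> state V -> Prop :=
| step_pop : forall st r q' R0,
    ph st = PPop V -> queue st = r :: q' -> nth_error (recs st) r = Some R0 ->
    step E st (mkSt (recs st) q' (sigma st) (trav st)
                 (PProc r (rv R0) (rlvl R0) (rtime R0) (trav st) []))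
| step_create : forall st r u d tau tr0 done v t sg',
    ph st = PProc r u d tau tr0 done -> ~ In v done ->
    inB E u tau tr0 (u, v, t) ->
    (forall t', inB E u tau tr0 (u, v, t') -> t <= t') ->
    sgt (sigma st v) t ->
    (* case (i): no record of v in Q; case (iii): some, but none of level d+1 *)
    (~ qhas st v (fun _ => True) \/
     (qhas st v (fun _ => True) /\ ~ qhas st v (fun r0 => rlvl r0 = S d))) ->
    sig_upd (sigma st) sg' v t ->
    step E st (mkSt (recs st ++ [mkRec v (S d) t (Some r)])
                    (queue st ++ [length (recs st)]) sg'
                    ((u, v, t) :: trav st) (PProc r u d tau tr0 (v :: done)))
| step_update : forall st r u d tau tr0 done v t sg' j Rj,
    ph st = PProc r u d tau tr0 done -> ~ In v done ->
    inB E u tau tr0 (u, v, t) ->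
    (forall t', inB E u tau tr0 (u, v, t') -> t <= t') ->
    sgt (sigma st v) t ->
    (* case (ii) *)
    In j (queue st) -> nth_error (recs st) j = Some Rj -> rv Rj = v -> rlvl Rj = S d ->
    sig_upd (sigma st) sg' v t ->
    step E st (mkSt (upd_nth (recs st) j (mkRec v (S d) t (Some r)))
                    (queue st) sg'
                    ((u, v, t) :: trav st) (PProc r u d tau tr0 (v :: done)))
| step_skip : forall st r u d tau tr0 done v t,
    ph st = PProc r u d tau tr0 done -> ~ In v done ->
    inB E u tau tr0 (u, v, t) ->
    (forall t', inB E u tau tr0 (u, v, t') -> t <= t') ->
    ~ sgt (sigma st v) t ->
    step E st (mkSt (recs st) (queue st) (sigma st)
                    ((u, v, t) :: trav st) (PProc r u d tau tr0 (v :: done)))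
| step_finish : forall st r u d tau tr0 done,
    ph st = PProc r u d tau tr0 done ->
    (forall v t, inB E u tau tr0 (u, v, t) -> In v done) ->
    step E st (mkSt (recs st) (queue st) (sigma st) (trav st) (PPop V)).

Definition init_state (V : Type) (s : V) (ts : R) (st : state V) : Prop :=
  recs st = [mkRec s 0 ts None] /\ queue st = [0%nat] /\
  sigma st s = Some ts /\ (forall x, x <> s -> sigma st x = None) /\
  trav st = [] /\ ph st = PPop V.

Definition final_state (V : Type) (st : state V) : Prop :=
  ph st = PPop V /\ queue st = [].

(* Main.v *)
Require Import Defs.
From Stdlib Require Import Reals List Relations Lia Lra Classical.
Import ListNotations.
Open Scope R_scope.

Section Aux.
Context {V : Type}.

Fixpoint lastt (tmin : R) (P : list (edge V)) : R :=
  match P with [] => tmin | (_, _, t) :: P' => lastt t P' end.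

Lemma twalk_app (E : list (edge V)) : forall P x y tmin z t,
  twalk E x y tmin P -> In (y, z, t) E -> lastt tmin P <= t ->
  twalk E x z tmin (P ++ [(y, z, t)]) /\ lastt tmin (P ++ [(y, z, t)]) = t.
Proof.
  induction P as [|[[a b] t0] P IH]; intros x y tmin z t Hw Hin Hl; simpl in *.
  - subst. repeat split; auto.
  - destruct Hw as (H1 & H2 & H3 & H4).
    destruct (IH b y t0 z t H4 Hin Hl) as [Hw' Hl'].
    repeat split; auto.
Qed.

Lemma upd_in {A} : forall (l : list A) j a x, In x (upd_nth l j a) -> x = a \/ In x l.
Proof.
  induction l as [|b l IH]; intros j a x H; simpl in *; [tauto|].
  destruct j as [|j]; simpl in H; destruct H as [H|H]; auto.
  destruct (IH j a x H); auto.
Qed.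

Lemma upd_keep {A} : forall (l : list A) j a x, In x l ->
  In x (upd_nth l j a) \/ nth_error l j = Some x.
Proof.
  induction l as [|b l IH]; intros j a x H; simpl in *; [tauto|].
  destruct j as [|j]; simpl; destruct H as [H|H]; subst; auto.
  destruct (IH j a x H); auto.
Qed.

Lemma upd_new {A} : forall (l : list A) j a b, nth_error l j = Some b -> In a (upd_nth l j a).
Proof.
  induction l as [|c l IH]; intros j a b H; destruct j; simpl in *; try discriminate; auto.
  right; eauto.
Qed.

Lemma upd_eq {A} : forall (l : list A) j a b, nth_error l j = Some b ->
  nth_error (upd_nth l j a) j = Some a.
Proof.
  induction l as [|c l IH]; intros j a b H; destruct j; simpl in *; try discriminate; eauto.
Qed.

Lemma upd_ne {A} : forall (l : list A) j a k, k <> j ->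
  nth_error (upd_nth l j a) k = nth_error l k.
Proof.
  induction l as [|c l IH]; intros j a k H; destruct j, k; simpl; auto; try lia.
Qed.

Lemma upd_len {A} : forall (l : list A) j a, length (upd_nth l j a) = length l.
Proof. induction l; destruct j; simpl; auto. Qed.

Fixpoint srt (l : list nat) : Prop :=
  match l with a :: ((b :: _) as l') => (a <= b)%nat /\ srt l' | _ => True end.

Lemma srt_tail : forall a l, srt (a :: l) -> srt l.
Proof. intros a [|b l] H; simpl in *; tauto. Qed.

Lemma srt_head : forall l h y, srt (h :: l) -> In y l -> (h <= y)%nat.
Proof.
  induction l as [|b l IH]; intros h y H Hy; simpl in *; [tauto|].
  destruct H as [H1 H2]. destruct Hy as [Hy|Hy]; [lia|].
  specialize (IH b y H2 Hy). lia.
Qed.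

Lemma srt_app1 : forall l x, srt l -> (forall y, In y l -> (y <= x)%nat) -> srt (l ++ [x]).
Proof.
  induction l as [|a l IH]; intros x H Hy; simpl; auto.
  destruct l as [|b l]; simpl in *.
  - split; [apply Hy; auto | exact I].
  - destruct H as [H1 H2]. split; [exact H1|].
    apply (IH x H2). intros y Hy'; apply Hy; simpl in *; tauto.
Qed.

Lemma NoDup_snoc {A} : forall (l : list A) a, NoDup l -> ~ In a l -> NoDup (l ++ [a]).
Proof.
  induction l as [|b l IH]; intros a H Ha; simpl.
  - constructor; [intros []|constructor].
  - inversion H; subst. constructor.
    + rewrite in_app_iff. simpl in *. intros [Hx|[Hx|Hx]]; auto.
    + apply IH; simpl in *; auto.
Qed.

End Aux.
Section Main.
Context {V : Type} (E : list (edge V)) (s : V) (ts : R).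

Definition Good (l : list (rec V)) (x : V) (L : nat) (t : R) : Prop :=
  exists R0, In R0 l /\ rv R0 = x /\ (rlvl R0 <= L)%nat /\ rtime R0 <= t.

Definition Fin (l : list (rec V)) (Ri : rec V) : Prop :=
  forall x t, In (rv Ri, x, t) E -> rtime Ri <= t -> Good l x (S (rlvl Ri)) t.

Definition lvl_of (l : list (rec V)) (j : nat) : nat :=
  match nth_error l j with Some R0 => rlvl R0 | None => O end.

Definition qlev (st : state V) := map (lvl_of (recs st)) (queue st).

Definition actlev (st : state V) :=
  match ph st with PProc _ _ d _ _ _ => d :: qlev st | _ => qlev st end.

Record Inv (st : state V) : Prop := {
 i_qvalid : forall j, In j (queue st) -> (j < length (recs st))%nat;
 i_nodup : NoDup (queue st);
 i_proc : forall r u d tau tr0 done, ph st = PProc r u d tau tr0 done ->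
     (exists p, nth_error (recs st) r = Some (mkRec u d tau p)) /\ ~ In r (queue st) /\
     incl tr0 (trav st) /\
     (forall x t, In x done -> inB E u tau tr0 (u, x, t) -> Good (recs st) x (S d) t);
 i_lev : forall R0 L, In R0 (recs st) -> In L (actlev st) -> (rlvl R0 <= S L)%nat;
 i_srt : srt (actlev st);
 i_top : forall h rest, actlev st = h :: rest -> forall L, In L rest -> (L <= S h)%nat;
 i_trav : forall y x t L, In (y, x, t) (trav st) -> In L (actlev st) -> Good (recs st) x (S L) t;
 i_siga : forall x m, Defs.sigma st x = Some m -> exists R0, In R0 (recs st) /\ rv R0 = x /\ rtime R0 <= m;
 i_sigb : forall R0, In R0 (recs st) -> exists m, Defs.sigma st (rv R0) = Some m /\ m <= rtime R0;
 i_sound : forall R0, In R0 (recs st) -> exists P, twalk E s (rv R0) ts P /\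
     length P = rlvl R0 /\ lastt ts P <= rtime R0;
 i_done : forall i Ri, nth_error (recs st) i = Some Ri -> ~ In i (queue st) ->
     (forall r u d tau tr0 done, ph st = PProc r u d tau tr0 done -> i <> r) -> Fin (recs st) Ri
}.

Arguments i_qvalid {st}.
Arguments i_nodup {st}.
Arguments i_proc {st}.
Arguments i_lev {st}.
Arguments i_srt {st}.
Arguments i_top {st}.
Arguments i_trav {st}.
Arguments i_siga {st}.
Arguments i_sigb {st}.
Arguments i_sound {st}.
Arguments i_done {st}.

Lemma Good_mono : forall l x L L' t, (L <= L')%nat -> Good l x L t -> Good l x L' t.
Proof. intros l x L L' t H (R0 & H1 & H2 & H3 & H4). exists R0; repeat split; auto; lia. Qed.

Lemma Good_app : forall l m x L t, Good l x L t -> Good (l ++ m) x L t.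
Proof. intros l m x L t (R0 & H1 & H2 & H3 & H4). exists R0; repeat split; auto.
  apply in_or_app; auto. Qed.

Lemma Good_upd : forall l j Rj nr x L t, nth_error l j = Some Rj ->
  rv nr = rv Rj -> rlvl nr = rlvl Rj -> rtime nr <= rtime Rj ->
  Good l x L t -> Good (upd_nth l j nr) x L t.
Proof.
  intros l j Rj nr x L t Hj H1 H2 H3 (R0 & G1 & G2 & G3 & G4).
  destruct (upd_keep l j nr R0 G1) as [G|G].
  - exists R0; auto.
  - rewrite Hj in G. injection G as <-. exists nr; repeat split.
    + eapply upd_new; eauto.
    + congruence.
    + lia.
    + lra.
Qed.

Lemma actlev_proc : forall st r u d tau tr0 done, ph st = PProc r u d tau tr0 done ->
  actlev st = d :: qlev st.
Proof. intros st r u d tau tr0 done H. unfold actlev. rewrite H. reflexivity. Qed.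

Lemma actlev_pop : forall st, ph st = PPop V -> actlev st = qlev st.
Proof. intros st H. unfold actlev. rewrite H. reflexivity. Qed.

Arguments actlev_proc {st r u d tau tr0 done}.
Arguments actlev_pop {st}.

Lemma pres_pop : forall st r q' R0,
    ph st = PPop V -> queue st = r :: q' -> nth_error (recs st) r = Some R0 -> Inv st ->
    Inv (mkSt (recs st) q' (Defs.sigma st) (trav st)
                 (PProc r (rv R0) (rlvl R0) (rtime R0) (trav st) [])).
Proof.
  intros st r q' R0 Hph Hq Hr I.
  assert (Ha : actlev (mkSt (recs st) q' (Defs.sigma st) (trav st)
                 (PProc r (rv R0) (rlvl R0) (rtime R0) (trav st) [])) = actlev st).
  { rewrite (actlev_pop Hph). unfold actlev, qlev. simpl. rewrite Hq. simpl.
    unfold lvl_of. simpl. rewrite ?Hr. reflexivity. }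
  pose proof (i_nodup I) as ND. rewrite Hq in ND. inversion ND; subst.
  constructor; try rewrite Ha; simpl.
  - intros j Hj. apply (i_qvalid I). rewrite Hq. simpl; auto.
  - auto.
  - intros r1 u d tau tr0 done Heq. injection Heq as <- <- <- <- <- <-.
    split; [|split; [|split]].
    + exists (rpred R0). rewrite Hr. destruct R0; reflexivity.
    + auto.
    + intros e He; auto.
    + intros x t [].
  - apply (i_lev I).
  - apply (i_srt I).
  - apply (i_top I).
  - apply (i_trav I).
  - apply (i_siga I).
  - apply (i_sigb I).
  - apply (i_sound I).
  - intros i Ri Hi Hni Hr'. apply (i_done I i Ri Hi).
    + rewrite Hq. intros [Hx|Hx]; [|tauto]. subst. apply (Hr' i _ _ _ _ _ eq_refl). reflexivity.
    + intros. rewrite Hph in H. discriminate.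
Qed.

Lemma pres_skip : forall st r u d tau tr0 done v t,
    ph st = PProc r u d tau tr0 done -> ~ In v done ->
    inB E u tau tr0 (u, v, t) ->
    (forall t', inB E u tau tr0 (u, v, t') -> t <= t') ->
    ~ sgt (Defs.sigma st v) t -> Inv st ->
    Inv (mkSt (recs st) (queue st) (Defs.sigma st)
                    ((u, v, t) :: trav st) (PProc r u d tau tr0 (v :: done))).
Proof.
  intros st r u d tau tr0 done v t Hph Hnd HB Hmin Hs I.
  set (st' := mkSt _ _ _ _ _).
  assert (Ha : actlev st' = actlev st).
  { rewrite (actlev_proc Hph). reflexivity. }
  assert (Hd : In d (actlev st)) by (rewrite (actlev_proc Hph); simpl; auto).
  assert (Hg : Good (recs st) v (S d) t).
  { destruct (Defs.sigma st v) as [m|] eqn:Em; simpl in Hs; [|tauto].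
    destruct (i_siga I v m Em) as (R1 & H1 & H2 & H3).
    exists R1; repeat split; auto. apply (i_lev I R1 d H1 Hd). lra. }
  assert (HL : forall L, In L (actlev st) -> (d <= L)%nat).
  { intros L HL. pose proof (i_srt I) as Hs'. rewrite (actlev_proc Hph) in Hs', HL.
    destruct HL as [<-|HL]; [lia|]. eapply srt_head; eauto. }
  constructor; try rewrite Ha; unfold st' in *; simpl in *.
  - apply (i_qvalid I).
  - apply (i_nodup I).
  - intros r1 u1 d1 tau1 tr1 done1 Heq. injection Heq as <- <- <- <- <- <-.
    destruct (i_proc I _ _ _ _ _ _ Hph) as (P1 & P2 & P3 & P4).
    split; [auto|split; [auto|split]].
    + intros e He; right; auto.
    + intros x t' [<-|Hx] HB'.
      * destruct Hg as (R1 & H1 & H2 & H3 & H4). exists R1; repeat split; auto.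
        specialize (Hmin t' HB'). lra.
      * apply P4; auto.
  - apply (i_lev I).
  - apply (i_srt I).
  - apply (i_top I).
  - intros y x t' L [He|He] HL'.
    + injection He as <- <- <-. eapply Good_mono; [|exact Hg]. specialize (HL L HL'). lia.
    + eapply (i_trav I); eauto.
  - apply (i_siga I).
  - apply (i_sigb I).
  - apply (i_sound I).
  - intros i Ri Hi Hni Hr'. apply (i_done I i Ri Hi Hni).
    intros r1 u1 d1 tau1 tr1 done1 Heq. rewrite Hph in Heq. injection Heq as <- <- <- <- <- <-.
    apply (Hr' r u d tau tr0 (v :: done)); reflexivity.
Qed.

Lemma pres_finish : forall st r u d tau tr0 done,
    ph st = PProc r u d tau tr0 done ->
    (forall v t, inB E u tau tr0 (u, v, t) -> In v done) -> Inv st ->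
    Inv (mkSt (recs st) (queue st) (Defs.sigma st) (trav st) (PPop V)).
Proof.
  intros st r u d tau tr0 done Hph Hfin I.
  set (st' := mkSt _ _ _ _ _).
  assert (Ha : actlev st = d :: actlev st') by (rewrite (actlev_proc Hph); reflexivity).
  destruct (i_proc I _ _ _ _ _ _ Hph) as ((p & P1) & P2 & P3 & P4).
  constructor; unfold st' in *; simpl in *.
  - apply (i_qvalid I).
  - apply (i_nodup I).
  - intros; discriminate.
  - intros R0 L H1 H2. apply (i_lev I); auto. rewrite Ha; simpl; auto.
  - pose proof (i_srt I) as Hs. rewrite Ha in Hs. eapply srt_tail; eauto.
  - intros h rest Heq L HL. pose proof (i_srt I) as Hs. pose proof (i_top I) as Ht.
    rewrite Ha in Hs, Ht. cbv beta in *. rewrite Heq in Hs, Ht.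
    assert (L <= S d)%nat by (apply (Ht d (h :: rest) eq_refl); simpl; auto).
    assert (d <= h)%nat by (eapply srt_head; [exact Hs|simpl; auto]).
    lia.
  - intros y x t L H1 H2. apply (i_trav I y); auto. rewrite Ha; simpl; auto.
  - apply (i_siga I).
  - apply (i_sigb I).
  - apply (i_sound I).
  - intros i Ri Hi Hni _.
    destruct (Nat.eq_dec i r) as [->|Hir].
    + rewrite P1 in Hi. injection Hi as <-. intros x t Hin Ht. simpl in *.
      destruct (classic (In (u, x, t) tr0)) as [Htr|Htr].
      * apply (i_trav I u x t d); [apply P3; auto|]. rewrite Ha; simpl; auto.
      * apply P4; [|repeat split; simpl; auto].
        apply (Hfin x t). repeat split; simpl; auto.
    + apply (i_done I i Ri Hi Hni). intros r1 u1 d1 tau1 tr1 done1 Heq.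
      rewrite Hph in Heq. injection Heq as <- <- <- <- <- <-. auto.
Qed.


Lemma proc_facts : forall st r u d tau tr0 done, Inv st -> ph st = PProc r u d tau tr0 done ->
  In d (actlev st) /\ (forall L, In L (actlev st) -> (d <= L)%nat) /\
  (forall L, In L (actlev st) -> (L <= S d)%nat).
Proof.
  intros st r u d tau tr0 done I Hph.
  pose proof (i_srt I) as Hs. pose proof (i_top I) as Ht.
  rewrite (actlev_proc Hph) in *. split; [simpl; auto|split].
  - intros L [<-|HL]; [lia|]. eapply srt_head; eauto.
  - intros L [<-|HL]; [lia|]. eapply Ht; eauto.
Qed.

Lemma sound_new : forall st r u d tau tr0 done v t, Inv st -> ph st = PProc r u d tau tr0 done ->
  inB E u tau tr0 (u, v, t) ->
  exists P, twalk E s v ts P /\ length P = S d /\ lastt ts P <= t.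
Proof.
  intros st r u d tau tr0 done v t I Hph HB.
  destruct (i_proc I _ _ _ _ _ _ Hph) as ((p & P1) & _).
  destruct (i_sound I _ (nth_error_In _ _ P1)) as (P & W1 & W2 & W3). simpl in *.
  destruct HB as (B1 & B2 & B3 & B4). simpl in *.
  destruct (twalk_app E P s u ts v t W1 B1 ltac:(lra)) as [W4 W5].
  exists (P ++ [(u, v, t)]). rewrite length_app. simpl. repeat split; auto; try lia. lra.
Qed.

Lemma pres_create : forall st r u d tau tr0 done v t sg',
    ph st = PProc r u d tau tr0 done -> ~ In v done ->
    inB E u tau tr0 (u, v, t) ->
    (forall t', inB E u tau tr0 (u, v, t') -> t <= t') ->
    sgt (Defs.sigma st v) t ->
    sig_upd (Defs.sigma st) sg' v t -> Inv st ->
    Inv (mkSt (recs st ++ [mkRec v (S d) t (Some r)])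
                    (queue st ++ [length (recs st)]) sg'
                    ((u, v, t) :: trav st) (PProc r u d tau tr0 (v :: done))).
Proof.
  intros st r u d tau tr0 done v t sg' Hph Hnd HB Hmin Hs [Sg1 Sg2] I.
  set (nr := mkRec v (S d) t (Some r)).
  set (st' := mkSt _ _ _ _ _).
  destruct (proc_facts _ _ _ _ _ _ _ I Hph) as (Hd & Hge & Hle).
  destruct (i_proc I _ _ _ _ _ _ Hph) as ((p & P1) & P2 & P3 & P4).
  assert (Hq : qlev st' = qlev st ++ [S d]).
  { unfold qlev, st'; simpl. rewrite map_app. simpl. f_equal.
    - apply map_ext_in. intros j Hj. unfold lvl_of. rewrite nth_error_app1; auto.
      apply (i_qvalid I); auto.
    - unfold lvl_of. rewrite nth_error_app2, Nat.sub_diag; auto. }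
  assert (Ha : actlev st' = d :: qlev st ++ [S d]).
  { unfold actlev at 1. simpl. rewrite Hq. reflexivity. }
  assert (Ha0 := actlev_proc Hph).
  assert (Hg : forall t', t <= t' -> Good (recs st ++ [nr]) v (S d) t').
  { intros t' Ht'. exists nr. repeat split; auto. apply in_or_app; simpl; auto. }
  assert (Hr : (r < length (recs st))%nat).
  { apply nth_error_Some. rewrite P1. discriminate. }
  constructor; try rewrite Ha; unfold st' in *; simpl in *.
  - intros j Hj. rewrite length_app. simpl. apply in_app_iff in Hj. destruct Hj as [Hj|[<-|[]]].
    + specialize (i_qvalid I j Hj). lia.
    + lia.
  - apply NoDup_snoc; [apply (i_nodup I)|]. intros Hj. specialize (i_qvalid I _ Hj). lia.
  - intros r1 u1 d1 tau1 tr1 done1 Heq. injection Heq as <- <- <- <- <- <-.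
    split; [|split; [|split]].
    + exists p. rewrite nth_error_app1; auto.
    + rewrite in_app_iff. intros [H|[H|[]]]; auto. lia.
    + intros e He; right; auto.
    + intros x t' [<-|Hx] HB'.
      * apply Hg. apply Hmin; auto.
      * apply Good_app. apply P4; auto.
  - intros R0 L HR HL. apply in_app_iff in HR.
    assert (HL' : In L (actlev st) \/ L = S d).
    { rewrite Ha0. destruct HL as [HL|HL]; [left; simpl; auto|].
      apply in_app_iff in HL. destruct HL as [HL|[HL|[]]]; [left; simpl; auto|right; auto]. }
    destruct HR as [HR|[<-|[]]].
    + destruct HL' as [HL'| ->]; [apply (i_lev I); auto|].
      specialize (i_lev I R0 d HR Hd). lia.
    + simpl. destruct HL' as [HL'| ->]; [specialize (Hge L HL')|]; lia.
  - change (srt ((d :: qlev st) ++ [S d])). apply srt_app1.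
    + rewrite <- Ha0. apply (i_srt I).
    + rewrite <- Ha0. auto.
  - intros h rest Heq L HL. injection Heq as Eh Er. subst h rest. apply in_app_iff in HL.
    destruct HL as [HL|[<-|[]]]; [|lia]. apply Hle. rewrite Ha0. simpl; auto.
  - assert (HL' : forall L, In L (d :: qlev st ++ [S d]) -> In L (actlev st) \/ L = S d).
    { intros L HL. rewrite Ha0. destruct HL as [HL|HL]; [left; simpl; auto|].
      apply in_app_iff in HL. destruct HL as [HL|[HL|[]]]; [left; simpl; auto|right; auto]. }
    intros y x t' L [He|He] HL.
    + injection He as <- <- <-. eapply Good_mono; [|apply Hg; lra].
      destruct (HL' L HL) as [H| ->]; [apply Hge in H|]; lia.
    + apply Good_app. destruct (HL' L HL) as [H| ->].
      * eapply (i_trav I); eauto.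
      * eapply Good_mono; [|eapply (i_trav I); eauto]. lia.
  - intros x m Hm. destruct (classic (x = v)) as [->|Hxv].
    + rewrite Sg1 in Hm. injection Hm as <-. exists nr. split; [|split; [reflexivity|simpl; lra]].
      apply in_or_app; simpl; auto.
    + rewrite Sg2 in Hm; auto. destruct (i_siga I x m Hm) as (R1 & H1 & H2 & H3).
      exists R1. repeat split; auto. apply in_or_app; auto.
  - intros R0 HR. apply in_app_iff in HR. destruct HR as [HR|[<-|[]]].
    + destruct (classic (rv R0 = v)) as [Hv|Hv].
      * rewrite Hv, Sg1. exists t. split; auto.
        destruct (i_sigb I R0 HR) as (m & M1 & M2). rewrite Hv in M1. rewrite M1 in Hs. simpl in Hs. lra.
      * rewrite Sg2; auto. apply (i_sigb I R0 HR).
    + simpl. rewrite Sg1. exists t. split; [reflexivity|lra].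
  - intros R0 HR. apply in_app_iff in HR. destruct HR as [HR|[<-|[]]].
    + apply (i_sound I R0 HR).
    + simpl. eapply sound_new; eauto.
  - intros i Ri Hi Hni Hr'.
    assert (Hil : (i < length (recs st))%nat).
    { destruct (Nat.lt_ge_cases i (length (recs st))) as [H|H]; auto.
      destruct (Nat.eq_dec i (length (recs st))) as [->|H'].
      - exfalso. apply Hni. apply in_or_app; simpl; auto.
      - rewrite nth_error_app2 in Hi; auto.
        destruct (i - length (recs st))%nat as [|k] eqn:Ek; [lia|].
        destruct k; simpl in Hi; discriminate. }
    rewrite nth_error_app1 in Hi; auto.
    intros x t' H1 H2. apply Good_app.
    apply (i_done I i Ri Hi); auto.
    + intros Hx; apply Hni; apply in_or_app; auto.
    + intros r1 u1 d1 tau1 tr1 done1 Heq. rewrite Hph in Heq.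
      injection Heq as <- <- <- <- <- <-. apply (Hr' r u d tau tr0 (v :: done)); reflexivity.
Qed.

Lemma pres_update : forall st r u d tau tr0 done v t sg' j Rj,
    ph st = PProc r u d tau tr0 done -> ~ In v done ->
    inB E u tau tr0 (u, v, t) ->
    (forall t', inB E u tau tr0 (u, v, t') -> t <= t') ->
    sgt (Defs.sigma st v) t ->
    In j (queue st) -> nth_error (recs st) j = Some Rj -> rv Rj = v -> rlvl Rj = S d ->
    sig_upd (Defs.sigma st) sg' v t -> Inv st ->
    Inv (mkSt (upd_nth (recs st) j (mkRec v (S d) t (Some r)))
                    (queue st) sg'
                    ((u, v, t) :: trav st) (PProc r u d tau tr0 (v :: done))).
Proof.
  intros st r u d tau tr0 done v t sg' j Rj Hph Hnd HB Hmin Hs Hjq Hj Hrv Hlv [Sg1 Sg2] I.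
  set (nr := mkRec v (S d) t (Some r)).
  set (st' := mkSt _ _ _ _ _).
  destruct (proc_facts _ _ _ _ _ _ _ I Hph) as (Hd & Hge & Hle).
  destruct (i_proc I _ _ _ _ _ _ Hph) as ((p & P1) & P2 & P3 & P4).
  assert (Htj : t <= rtime Rj).
  { destruct (i_sigb I Rj (nth_error_In _ _ Hj)) as (m & M1 & M2).
    rewrite Hrv in M1. rewrite M1 in Hs. simpl in Hs. lra. }
  assert (GU : forall x L t', Good (recs st) x L t' -> Good (upd_nth (recs st) j nr) x L t').
  { intros x L t' G. eapply Good_upd; eauto; simpl; auto. }
  assert (Hq : qlev st' = qlev st).
  { unfold qlev, st'; simpl. apply map_ext_in. intros k Hk. unfold lvl_of.
    destruct (Nat.eq_dec k j) as [->|Hkj].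
    - rewrite (upd_eq _ _ _ _ Hj), Hj. simpl. auto.
    - rewrite upd_ne; auto. }
  assert (Ha0 := actlev_proc Hph).
  assert (Ha : actlev st' = actlev st).
  { rewrite Ha0. unfold actlev at 1. simpl. rewrite Hq. reflexivity. }
  assert (Hnew : In nr (upd_nth (recs st) j nr)) by (eapply upd_new; eauto).
  assert (Hg : forall t', t <= t' -> Good (upd_nth (recs st) j nr) v (S d) t').
  { intros t' Ht'. exists nr. repeat split; auto. }
  assert (Hrj : r <> j) by (intros ->; auto).
  constructor; try rewrite Ha; unfold st' in *; simpl in *.
  - rewrite upd_len. apply (i_qvalid I).
  - apply (i_nodup I).
  - intros r1 u1 d1 tau1 tr1 done1 Heq. injection Heq as <- <- <- <- <- <-.
    split; [|split; [|split]].
    + exists p. rewrite upd_ne; auto.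
    + auto.
    + intros e He; right; auto.
    + intros x t' [<-|Hx] HB'.
      * apply Hg. apply Hmin; auto.
      * apply GU. apply P4; auto.
  - intros R0 L HR HL. destruct (upd_in _ _ _ _ HR) as [->|HR'].
    + simpl. specialize (Hge L HL). lia.
    + apply (i_lev I); auto.
  - apply (i_srt I).
  - apply (i_top I).
  - intros y x t' L [He|He] HL.
    + injection He as <- <- <-. eapply Good_mono; [|apply Hg; lra].
      specialize (Hge L HL). lia.
    + apply GU. eapply (i_trav I); eauto.
  - intros x m Hm. destruct (classic (x = v)) as [->|Hxv].
    + rewrite Sg1 in Hm. injection Hm as <-. exists nr. split; [auto|split; [reflexivity|simpl; lra]].
    + rewrite Sg2 in Hm; auto. destruct (i_siga I x m Hm) as (R1 & H1 & H2 & H3).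
      destruct (GU x (rlvl R1) m) as (R2 & G1 & G2 & G3 & G4).
      * exists R1; repeat split; auto.
      * exists R2; auto.
  - intros R0 HR. destruct (upd_in _ _ _ _ HR) as [->|HR'].
    + simpl. rewrite Sg1. exists t. split; [reflexivity|lra].
    + destruct (classic (rv R0 = v)) as [Hv|Hv].
      * rewrite Hv, Sg1. exists t. split; auto.
        destruct (i_sigb I R0 HR') as (m & M1 & M2). rewrite Hv in M1. rewrite M1 in Hs. simpl in Hs. lra.
      * rewrite Sg2; auto. apply (i_sigb I R0 HR').
  - intros R0 HR. destruct (upd_in _ _ _ _ HR) as [->|HR'].
    + simpl. eapply sound_new; eauto.
    + apply (i_sound I R0 HR').
  - intros i Ri Hi Hni Hr'.
    assert (Hij : i <> j) by (intros ->; auto).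
    rewrite upd_ne in Hi; auto.
    intros x t' H1 H2. apply GU.
    apply (i_done I i Ri Hi); auto.
    intros r1 u1 d1 tau1 tr1 done1 Heq. rewrite Hph in Heq.
    injection Heq as <- <- <- <- <- <-. apply (Hr' r u d tau tr0 (v :: done)); reflexivity.
Qed.

Lemma pres_step : forall st st', step E st st' -> Inv st -> Inv st' /\
  (forall x L t, Good (recs st) x L t -> Good (recs st') x L t).
Proof.
  intros st st' H I. destruct H.
  - split; [eapply pres_pop; eauto|auto].
  - split; [eapply pres_create; eauto|]. intros; simpl; apply Good_app; auto.
  - split; [eapply pres_update; eauto|]. intros x L t' G; simpl.
    assert (Htj : t <= rtime Rj).
    { destruct (i_sigb I Rj (nth_error_In _ _ H5)) as (m & M1 & M2).
      rewrite H6 in M1. rewrite M1 in H3. simpl in H3. lra. }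
    eapply Good_upd; eauto; simpl; auto.
  - split; [eapply pres_skip; eauto|auto].
  - split; [eapply pres_finish; eauto|auto].
Qed.


Lemma init_inv : forall st0, init_state s ts st0 -> Inv st0.
Proof.
  intros st0 (H1 & H2 & H3 & H4 & H5 & H6).
  assert (Ha : actlev st0 = [O]).
  { rewrite (actlev_pop H6). unfold qlev. rewrite H2, H1. reflexivity. }
  constructor; try rewrite Ha; rewrite ?H1, ?H2, ?H5; simpl.
  - intros j [<-|[]]; lia.
  - constructor; [intros []|constructor].
  - intros. rewrite H6 in H. discriminate.
  - intros R0 L [<-|[]] [<-|[]]; simpl; lia.
  - exact I.
  - intros h rest Heq L HL. injection Heq as <- <-. destruct HL.
  - intros y x t L [].
  - intros x m Hm. destruct (classic (x = s)) as [->|Hx].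
    + rewrite H3 in Hm. injection Hm as <-. exists (mkRec s O ts None). simpl. repeat split; auto; lra.
    + rewrite H4 in Hm; auto. discriminate.
  - intros R0 [<-|[]]. simpl. exists ts. split; auto; lra.
  - intros R0 [<-|[]]. exists []. simpl. repeat split; auto; lra.
  - intros i Ri Hi Hni _. destruct i as [|i].
    + exfalso. apply Hni. simpl; auto.
    + destruct i; simpl in Hi; discriminate.
Qed.

Lemma reach_inv : forall st st', clos_refl_trans (state V) (step E) st st' -> Inv st ->
  Inv st' /\ (forall x L t, Good (recs st) x L t -> Good (recs st') x L t).
Proof.
  intros st st' H. induction H as [a b H|a|a b c H1 IH1 H2 IH2]; intros I.
  - apply pres_step; auto.
  - split; auto.
  - destruct (IH1 I) as [I1 G1]. destruct (IH2 I1) as [I2 G2]. split; auto.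
Qed.

Lemma walk_good : forall st, Inv st -> queue st = [] -> ph st = PPop V ->
  forall P y x tmin l, twalk E y x tmin P -> Good (recs st) y l tmin ->
  Good (recs st) x (l + length P) (lastt tmin P).
Proof.
  intros st I Hq Hph. induction P as [|[[a b] t] P IH]; intros y x tmin l Hw G; simpl in *.
  - subst. rewrite Nat.add_0_r. auto.
  - destruct Hw as (W1 & W2 & W3 & W4). subst a.
    destruct G as (R0 & G1 & G2 & G3 & G4).
    destruct (In_nth_error _ _ G1) as (i & Hi).
    assert (F : Fin (recs st) R0).
    { apply (i_done I i R0 Hi); [rewrite Hq; auto|]. intros. rewrite Hph in H. discriminate. }
    rewrite <- G2 in W1. specialize (F b t W1 ltac:(lra)).
    rewrite <- Nat.add_succ_comm. apply (IH b x t (S l) W4).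
    eapply Good_mono; [|exact F]. lia.
Qed.

End Main.

Lemma exists_min {V} : forall (l : list (rec V)) v, (exists R0, In R0 l /\ rv R0 = v) ->
  exists Ro, In Ro l /\ rv Ro = v /\ forall R', In R' l -> rv R' = v -> (rlvl Ro <= rlvl R')%nat.
Proof.
  induction l as [|a l IH]; intros v (R0 & H1 & H2); [destruct H1|].
  destruct (classic (exists R1, In R1 l /\ rv R1 = v)) as [Hex|Hno].
  - destruct (IH v Hex) as (Ro & O1 & O2 & O3).
    destruct (classic (rv a = v /\ (rlvl a < rlvl Ro)%nat)) as [[Ha1 Ha2]|Ha].
    + exists a. split; [simpl; auto|split; auto]. intros R' [HR|HR] HR'; [subst R'; lia|].
      specialize (O3 R' HR HR'). lia.
    + exists Ro. split; [simpl; auto|split; auto]. intros R' [HR|HR] HR'; auto. subst R'.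
      destruct (Nat.lt_ge_cases (rlvl a) (rlvl Ro)); auto. exfalso; apply Ha; auto.
  - destruct H1 as [<-|H1]; [|exfalso; apply Hno; eauto].
    exists a. split; [simpl; auto|split; auto]. intros R' [HR|HR] HR'; [subst R'; auto|].
    exfalso; apply Hno; eauto.
Qed.

Theorem lemma12 (V : Type) (E : list (edge V)) (s : V) (ts : R)
  (st0 st : state V) (v : V) :
  (exists lV : list V, forall x, In x lV) ->
  NoDup E ->
  (forall a b t, In (a, b, t) E -> a <> b) ->
  init_state s ts st0 ->
  clos_refl_trans (state V) (step E) st0 st ->
  final_state st ->
  v <> s ->
  reachable E ts s v ->
  exists Ro, In Ro (recs st) /\ rv Ro = v /\
    (forall R', In R' (recs st) -> rv R' = v -> (rlvl Ro <= rlvl R')%nat) /\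
    is_dist E ts s v (rlvl Ro).
Proof.
  intros _ _ _ Hinit Hrt [Hph Hq] Hvs [P0 [HP0 HW0]].
  pose proof (init_inv E s ts st0 Hinit) as I0.
  destruct (reach_inv E s ts st0 st Hrt I0) as [I Glift].
  assert (G0 : Good (recs st) s O ts).
  { apply Glift. destruct Hinit as (H1 & _). rewrite H1.
    exists (mkRec s O ts None). simpl. repeat split; auto; lra. }
  assert (KEY : forall P, tpath E ts s v P -> Good (recs st) v (length P) (lastt ts P)).
  { intros P [_ HW]. apply (walk_good E s ts st I Hq Hph P s v ts O HW G0). }
  destruct (exists_min (recs st) v) as (Ro & O1 & O2 & O3).
  { destruct (KEY P0 (conj HP0 HW0)) as (R0 & H1 & H2 & _). eauto. }
  exists Ro. split; [auto|split; [auto|split; [auto|split]]].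
  - destruct (i_sound E s ts st I Ro O1) as (P & W1 & W2 & W3).
    exists P. rewrite O2 in W1. split; auto. split; auto.
    intros ->. simpl in W1. auto.
  - intros P HP. destruct (KEY P HP) as (R0 & H1 & H2 & H3 & _).
    specialize (O3 R0 H1 H2). lia.
Qed.
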